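(* Let $\alpha_1,\alpha_2,\beta_1,\beta_2,\gamma\in\widehat{\mathbb{F}_q^\times}$ with $\gamma\notin\{\alpha_1\alpha_2,\beta_1\beta_2,\alpha_1\beta_2,\alpha_2\beta_1,\alpha_1\alpha_2\beta_1\beta_2\}$ and $\varepsilon\notin\{\alpha_1,\alpha_2,\beta_1,\beta_2\}$. Then for $\lambda\in\mathbb{F}_q$, $\lambda\neq1$, $$\alpha_1\alpha_2\beta_1\overline{\gamma}(1-\lambda)\,F_3\!\left({\alpha_1,\alpha_2;\beta_1,\beta_2\atop\gamma};\lambda,\frac{\lambda}{\lambda-1}\right)=F_3\!\left({\overline{\alpha_2\beta_1}\gamma,\alpha_1\alpha_2\beta_1\beta_2\overline{\gamma};\overline{\alpha_1\alpha_2}\gamma,\alpha_2\atop\gamma};\lambda,\frac{\lambda}{\lambda-1}\right).$$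
   Context: $\mathbb{F}_q$ is a finite field with $q$ elements. $\widehat{\mathbb{F}_q^\times}$ is the group of multiplicative characters $\mathbb{F}_q^\times\to\overline{\mathbb{Q}}^\times$, $\varepsilon$ the trivial character; every character (including $\varepsilon$) is extended by $0$ at $0$; $\overline{\eta}=\eta^{-1}$, $\overline{\eta_1\eta_2}=(\eta_1\eta_2)^{-1}$; $\delta(\eta)=1$ if $\eta=\varepsilon$, else $0$. $\psi$ is a fixed non-trivial additive character. $g(\eta)=-\sum_{x\in\mathbb{F}_q^\times}\psi(x)\eta(x)$, $g^\circ(\eta)=q^{\delta(\eta)}g(\eta)$, $(\alpha)_\nu=g(\alpha\nu)/g(\alpha)$, $(\alpha)^\circ_\nu=g^\circ(\alpha\nu)/g^\circ(\alpha)$. For $x,y\in\mathbb{F}_q$, $F_3\!\left({\alpha_1,\alpha_2;\beta_1,\beta_2\atop\gamma};x,y\right)=\frac{1}{(1-q)^2}\sum_{\nu_1,\nu_2\in\widehat{\mathbb{F}_q^\times}}\frac{(\alpha_1)_{\nu_1}(\alpha_2)_{\nu_2}(\beta_1)_{\nu_1}(\beta_2)_{\nu_2}}{(\gamma)^\circ_{\nu_1\nu_2}(\varepsilon)^\circ_{\nu_1}(\varepsilon)^\circ_{\nu_2}}\nu_1(x)\nu_2(y)$. *)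

(* Defs.v *)
(* multiplicative characters of F_q^x are the irreducible
   (= linear, since the group is abelian) characters of the finite group
   {unit F}, valued in algC (algebraic closure of Q). *)
From HB Require Import structures.
From mathcomp Require Import all_boot all_order all_algebra all_fingroup all_solvable all_field all_character.
Set Implicit Arguments. Unset Strict Implicit. Unset Printing Implicit Defensive.
Import GRing.Theory Num.Theory.
Local Open Scope ring_scope.

Section FFChars.
Variable F : finFieldType.

Definition UG : {group {unit F}} := [set: {unit F}]%G.

Definition cext (eta : 'CF(UG)) (x : F) : algC :=
  if insub x is Some u then eta u else 0.

Definition nontriv_addchar (psi : F -> algC) : Prop :=
  psi 0 = 1 /\ (forall x y, psi (x + y) = psi x * psi y) /\ exists x, psi x != 1.

Variable psi : F -> algC.

Definition gauss (eta : 'CF(UG)) : algC := - \sum_(x : {unit F}) psi (val x) * eta x.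

Definition gauss0 (eta : 'CF(UG)) : algC :=
  if eta == 1 then #|F|%:R * gauss eta else gauss eta.

Definition poch (a nu : 'CF(UG)) : algC := gauss (a * nu) / gauss a.
Definition poch0 (a nu : 'CF(UG)) : algC := gauss0 (a * nu) / gauss0 a.

Definition appellF3 (a1 a2 b1 b2 c : 'CF(UG)) (x y : F) : algC :=
  (1 - #|F|%:R)^-2 *
  \sum_(i : Iirr UG) \sum_(j : Iirr UG)
    (poch a1 'chi_i * poch a2 'chi_j * poch b1 'chi_i * poch b2 'chi_j
     / (poch0 c ('chi_i * 'chi_j) * poch0 1 'chi_i * poch0 1 'chi_j))
    * cext 'chi_i x * cext 'chi_j y.

End FFChars.

(* Main.v *)
Require Import Defs.
From HB Require Import structures.
From mathcomp Require Import all_boot all_order all_algebra all_fingroup all_solvable all_field all_character.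
From mathcomp Require Import ring.
Set Implicit Arguments. Unset Strict Implicit. Unset Printing Implicit Defensive.
Import GRing.Theory Num.Theory.
Local Open Scope ring_scope.

Section Basics.
Variable F : finFieldType.
Local Notation G := (UG F).

Lemma UG_abelian : abelian G.
Proof. by apply/centsP=> u _ v _; apply/val_inj; rewrite /= mulrC. Qed.

Lemma chi_lin (i : Iirr G) : 'chi_i \is a linear_char.
Proof. exact: (char_abelianP _ UG_abelian). Qed.

Lemma inG (u : {unit F}) : u \in G.
Proof. by rewrite inE. Qed.

Lemma cext_unit (phi : 'CF(G)) (u : {unit F}) : cext phi (val u) = phi u.
Proof. by rewrite /cext valK. Qed.

Lemma cext_nunit (phi : 'CF(G)) x : x = 0 -> cext phi x = 0.
Proof. by move=> ->; rewrite /cext insubF // unitr0. Qed.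

Lemma cext0 (phi : 'CF(G)) : cext phi 0 = 0.
Proof. exact: cext_nunit. Qed.

Lemma cextP (phi : 'CF(G)) x : x != 0 -> exists u : {unit F}, x = val u /\ cext phi x = phi u.
Proof.
move=> nx; have ux : x \is a GRing.unit by rewrite unitfE.
exists (Sub x ux); split => //; by rewrite /cext insubT.
Qed.

Lemma cext_mul (phi psi : 'CF(G)) x : cext (phi * psi) x = cext phi x * cext psi x.
Proof. by rewrite /cext; case: insubP => [u _ _|_]; rewrite ?cfunE ?mul0r. Qed.

Lemma cext_conj (phi : 'CF(G)) x : cext (phi^*)%CF x = (cext phi x)^*.
Proof. by rewrite /cext; case: insubP => [u _ _|_]; rewrite ?cfunE ?conjC0. Qed.

Lemma cext_one x : cext (1 : 'CF(G)) x = (x != 0)%:R.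
Proof.
have [->|nx] := eqVneq x 0; first by rewrite cext0.
by have [u [-> ->]] := cextP 1 nx; rewrite cfun1E inG.
Qed.

Section Lin.
Variable phi : 'CF(G).
Hypothesis lphi : phi \is a linear_char.

Lemma cextM x y : cext phi (x * y) = cext phi x * cext phi y.
Proof.
have [->|nx] := eqVneq x 0; first by rewrite mul0r !cext0 mul0r.
have [->|ny] := eqVneq y 0; first by rewrite mulr0 !cext0 mulr0.
have [u [-> ->]] := cextP phi nx; have [v [-> ->]] := cextP phi ny.
by rewrite -lin_charM ?inG // -cext_unit.
Qed.

Lemma cext1 : cext phi 1 = 1.
Proof. by rewrite (_ : 1 = val (1%g : {unit F})) // cext_unit lin_char1. Qed.

Lemma cext_neq0 x : x != 0 -> cext phi x != 0.
Proof. by move=> nx; have [u [_ ->]] := cextP phi nx; rewrite lin_char_neq0 ?inG. Qed.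

Lemma cextV x : cext phi (x^-1) = (cext phi x)^-1.
Proof.
have [->|nx] := eqVneq x 0; first by rewrite invr0 cext0 invr0.
have [u [-> ->]] := cextP phi nx.
by rewrite (_ : (val u)^-1 = val (u^-1)%g) // cext_unit lin_charV ?inG.
Qed.

Lemma cext_conjV x : (cext phi x)^* = (cext phi x)^-1.
Proof.
have [->|nx] := eqVneq x 0; first by rewrite cext0 conjC0 invr0.
have [u [-> ->]] := cextP phi nx.
by rewrite -lin_charV_conj ?inG // lin_charV ?inG.
Qed.

Lemma cextN1sq : cext phi (-1) * cext phi (-1) = 1.
Proof. by rewrite -cextM mulrNN mulr1 cext1. Qed.

Lemma cext_sum : phi != 1 -> \sum_x cext phi x = 0.
Proof.
move=> n1.
have [u phiu] : exists u : {unit F}, phi u != 1.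
  apply/existsP; apply: contraR n1 => /existsPn H.
  apply/eqP/cfun_inP => v _; by rewrite cfun1E inG; apply/eqP; move: (H v); rewrite negbK.
have nu : val u != 0 by rewrite -unitfE (valP u).
have: \sum_x cext phi x = cext phi (val u) * \sum_x cext phi x.
  rewrite mulr_sumr (reindex_inj (mulrI (valP u))) /=.
  by apply: eq_bigr => x _; rewrite cextM.
rewrite cext_unit => /eqP; rewrite -subr_eq0 -{1}[\sum_x _]mul1r -mulrBl mulf_eq0 subr_eq0 eq_sym.
by rewrite (negbTE phiu) => /eqP.
Qed.

End Lin.

Lemma sum_units (f : F -> algC) : f 0 = 0 ->
  \sum_(u : {unit F}) f (val u) = \sum_(x : F) f x.
Proof.
move=> f0; rewrite [RHS](bigD1 0) //= f0 add0r.
rewrite (reindex_omap (val : {unit F} -> F) insub); last first.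
  by move=> i ni; rewrite insubT // unitfE.
apply: eq_bigl => u /=; rewrite valK eqxx andbT -unitfE; by case: u.
Qed.

Lemma orth (x : F) : \sum_(i : Iirr G) cext 'chi_i x = (#|F|%:R - 1) * (x == 1)%:R.
Proof.
have [->|nx] := eqVneq x 0.
  rewrite big1; last by move=> i _; rewrite cext0.
  by rewrite eq_sym oner_eq0 mulr0.
have [u [xu _]] := cextP 1 nx.
have := second_orthogonality_relation u (group1 G).
under eq_bigr => i _ do rewrite lin_char1 ?chi_lin // conjC1 mulr1.
move=> E; rewrite xu; under eq_bigr => i _ do rewrite cext_unit.
rewrite E.
have -> : ('C_G[u])%g = G.
  by apply/setIidPl/subsetP => a _; apply/cent1P; apply/val_inj; rewrite /= mulrC.
rewrite card_finField_unit class1G inE.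
have -> : (u == 1%g) = (val u == 1) by rewrite -(inj_eq val_inj).
have q1 : (0 < #|F|)%N by apply/card_gt0P; exists 0.
rewrite -{2}(prednK q1) -natr1 addrK.
by case: (val u == 1); rewrite ?mulr1n ?mulr0n ?mulr1 ?mulr0.
Qed.

End Basics.

Section Gauss.
Variable F : finFieldType.
Local Notation G := (UG F).
Variable psi : F -> algC.
Hypothesis hpsi : nontriv_addchar psi.
Local Notation q := (#|F|%:R : algC).
Local Notation g := (gauss psi).

Lemma psi0 : psi 0 = 1. Proof. by case: hpsi. Qed.
Lemma psiD x y : psi (x + y) = psi x * psi y. Proof. by case: hpsi => _ []. Qed.

Lemma q_neq0 : q != 0.
Proof. by rewrite pnatr_eq0 -lt0n; apply/card_gt0P; exists 0. Qed.

Lemma psi_sum : \sum_x psi x = 0.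
Proof.
case: hpsi => _ [_ [x0 nx0]].
have E : \sum_x psi x = psi x0 * \sum_x psi x.
  rewrite mulr_sumr (reindex_inj (addrI x0)) /=.
  by apply: eq_bigr => x _; rewrite psiD.
apply/eqP; move/eqP: E; rewrite -subr_eq0 -{1}[\sum_x _]mul1r -mulrBl mulf_eq0 subr_eq0 eq_sym.
by rewrite (negbTE nx0).
Qed.


Lemma psi_sum_scale z : \sum_x psi (z * x) = (z == 0)%:R * q.
Proof.
have [->|nz] := eqVneq z 0.
  under eq_bigr => x _ do rewrite mul0r psi0.
  by rewrite sumr_const mul1r.
rewrite mul0r -[RHS]psi_sum; have uz : z \is a GRing.unit by rewrite unitfE.
by rewrite [RHS](reindex_inj (mulrI uz)).
Qed.

Lemma gaussE eta : g eta = - \sum_x psi x * cext eta x.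
Proof.
rewrite /gauss; congr (- _); rewrite -sum_units; last by rewrite cext0 mulr0.
by apply: eq_bigr => u _; rewrite cext_unit.
Qed.

Lemma gauss1 : g 1 = 1.
Proof.
rewrite gaussE; under eq_bigr => x _ do rewrite cext_one.
rewrite (bigD1 0) //= eqxx mulr0 add0r.
rewrite (eq_bigr (fun x => psi x)); last by move=> x /negPf ->; rewrite mulr1.
have := psi_sum; rewrite (bigD1 0) //= psi0 => /eqP; rewrite addrC addr_eq0 => /eqP ->.
by rewrite opprK.
Qed.

Section LinG.
Variable eta : 'CF(G).
Hypothesis leta : eta \is a linear_char.

Lemma twist a : eta != 1 -> \sum_x psi (a * x) * cext eta x = - g eta * cext eta (a^-1).
Proof.
move=> n1; have [->|na] := eqVneq a 0.
  under eq_bigr => x _ do rewrite mul0r psi0 mul1r.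
  by rewrite invr0 cext0 mulr0 cext_sum.
have ua : a^-1 \is a GRing.unit by rewrite unitfE invr_eq0.
rewrite (reindex_inj (mulrI ua)) /= gaussE opprK mulr_suml.
by apply: eq_bigr => x _; rewrite mulrA mulfV // mul1r (cextM leta); ring.
Qed.

Lemma gauss_prod : g eta * g (eta^*)%CF = cext eta (-1) * q - \sum_x cext eta x.
Proof.
rewrite [g (_^*)%CF]gaussE mulrN -mulNr mulr_sumr.
under eq_bigr => y _ do rewrite cext_conj (cext_conjV leta).
have step : forall y, - g eta * (psi y * (cext eta y)^-1)
   = (y != 0)%:R * \sum_w psi (y * (1 + w)) * cext eta w.
  move=> y; have [->|ny] := eqVneq y 0; first by rewrite cext0 invr0 !mulr0 mul0r.
  rewrite mul1r gaussE opprK.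
  have uy : y \is a GRing.unit by rewrite unitfE.
  rewrite [X in X * _](reindex_inj (mulrI uy)) /= mulr_suml.
  apply: eq_bigr => w _; rewrite (cextM leta) mulrDr mulr1 psiD.
  have := cext_neq0 leta ny => ny'.
  field.
  by [].
under eq_bigr => y _ do rewrite step.
rewrite (eq_bigr (fun y => \sum_w (y != 0)%:R * psi (y * (1 + w)) * cext eta w)); last first.
  by move=> y _; rewrite mulr_sumr; apply: eq_bigr => w _; rewrite mulrA.
rewrite exchange_big /=.
have inner : forall w, \sum_y (y != 0)%:R * psi (y * (1 + w)) * cext eta w
   = cext eta w * (((w == -1)%:R * q) - 1).
  move=> w; rewrite -mulr_suml mulrC; congr (_ * _).
  rewrite (bigD1 0) //= eqxx mul0r add0r.
  rewrite (eq_bigr (fun y => psi ((1 + w) * y))); last by move=> y /negPf ->; rewrite mul1r mulrC.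
  have := psi_sum_scale (1 + w); rewrite (bigD1 0) //= mulr0 psi0 => E.
  have -> : \sum_(i | i != 0) psi ((1 + w) * i) = (1 + w == 0)%:R * q - 1 by rewrite -E addrC addrK.
  by rewrite [1 + w]addrC addr_eq0.
under eq_bigr => w _ do rewrite inner.
rewrite (bigD1 (-1)) //= eqxx mul1r.
rewrite (eq_bigr (fun w => - cext eta w)); last by move=> w /negPf ->; rewrite mul0r sub0r mulrN1.
rewrite sumrN [X in _ = _ - X](bigD1 (-1)) //=.
ring.
Qed.
Lemma gauss_prod1 : eta != 1 -> g eta * g (eta^*)%CF = cext eta (-1) * q.
Proof. by move=> n1; rewrite gauss_prod cext_sum // subr0. Qed.

Lemma gauss0_prod : gauss0 psi eta * g (eta^*)%CF = cext eta (-1) * q.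
Proof.
rewrite /gauss0; have [->|n1] := eqVneq eta 1; last exact: gauss_prod1.
by rewrite cfConjC_cfun1 gauss1 cext_one oppr_eq0 oner_eq0 !mulr1 mul1r.
Qed.

Lemma gauss0_neq0 : gauss0 psi eta != 0.
Proof.
apply/eqP => E; have := gauss0_prod; rewrite E mul0r => /esym/eqP.
rewrite mulf_eq0 (negbTE q_neq0) orbF; apply/negP; by rewrite cext_neq0 // oppr_eq0 oner_eq0.
Qed.

Lemma inv_gauss0 : (gauss0 psi eta)^-1 = cext eta (-1) * g (eta^*)%CF / q.
Proof.
have h := gauss0_prod; have n0 := gauss0_neq0; have nq := q_neq0.
have e1 := cextN1sq leta.
apply: (mulfI n0); rewrite mulfV //.
have -> : gauss0 psi eta * (cext eta (-1) * g (eta^*)%CF / q) = cext eta (-1) * (gauss0 psi eta * g (eta^*)%CF) / q by ring.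
rewrite h mulrA e1 mul1r mulfV //.
Qed.
End LinG.
Lemma gauss_neq0 eta : eta \is a linear_char -> g eta != 0.
Proof.
move=> l; have l' : (eta^*)%CF \is a linear_char by rewrite cfConjC_lin_char.
have := gauss0_prod l'; rewrite cfConjCK => h.
apply/eqP => E; move: h; rewrite E mulr0 => /esym/eqP.
rewrite mulf_eq0 (negbTE q_neq0) orbF; apply/negP; by rewrite cext_neq0 // oppr_eq0 oner_eq0.
Qed.
End Gauss.

Section F3S.
Local Opaque gauss.
Variable F : finFieldType.
Local Notation G := (UG F).
Variable psi : F -> algC.
Hypothesis hpsi : nontriv_addchar psi.
Local Notation q := (#|F|%:R : algC).
Local Notation g := (gauss psi).
Local Notation lin phi := (phi \is a linear_char).

Lemma signV (phi : 'CF(G)) : lin phi -> cext phi (-1) = (cext phi (-1))^-1.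
Proof. by move=> l; rewrite -(cextV l) invrN1. Qed.

Lemma sign_neq0 (phi : 'CF(G)) : lin phi -> cext phi (-1) != 0.
Proof. by move=> l; rewrite cext_neq0 // oppr_eq0 oner_eq0. Qed.

Lemma inv_gauss0_prod (c n1 n2 : 'CF(G)) : lin c -> lin n1 -> lin n2 ->
  (gauss0 psi (c * (n1 * n2)))^-1
  = cext c (-1) * g ((c * (n1 * n2))^*)%CF / (q * cext n1 (-1) * cext n2 (-1)).
Proof.
move=> lc l1 l2; have l : lin (c * (n1 * n2)) by rewrite !rpredM.
rewrite (inv_gauss0 hpsi l) !cext_mul {1}(signV l1) {1}(signV l2).
have := sign_neq0 l1; have := sign_neq0 l2; have := q_neq0 F => *.
field; by repeat (apply/andP; split).
Qed.

Lemma summand_eq (a1 a2 b1 b2 c : 'CF(G)) (i j : Iirr G) :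
  lin a1 -> lin a2 -> lin b1 -> lin b2 -> lin c ->
  poch psi a1 'chi_i * poch psi a2 'chi_j * poch psi b1 'chi_i * poch psi b2 'chi_j
     / (poch0 psi c ('chi_i * 'chi_j) * poch0 psi 1 'chi_i * poch0 psi 1 'chi_j)
  = gauss0 psi c * cext c (-1) / (g a1 * g a2 * g b1 * g b2 * q)
    * (g (a1 * 'chi_i) * g (b1 * 'chi_i) * g (('chi_i)^*)%CF)
    * (g (a2 * 'chi_j) * g (b2 * 'chi_j) * g (('chi_j)^*)%CF)
    * g ((c * ('chi_i * 'chi_j))^*)%CF.
Proof.
move=> la1 la2 lb1 lb2 lc.
have li := chi_lin i; have lj := chi_lin j.
rewrite /poch /poch0 !mul1r.
have -> : gauss0 psi 1 = q by rewrite /gauss0 eqxx (gauss1 hpsi) mulr1.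
rewrite !invfM !invrK (inv_gauss0_prod lc li lj) (inv_gauss0 hpsi li) (inv_gauss0 hpsi lj).
have := sign_neq0 li; have := sign_neq0 lj; have := q_neq0 F.
have := gauss_neq0 hpsi la1; have := gauss_neq0 hpsi la2.
have := gauss_neq0 hpsi lb1; have := gauss_neq0 hpsi lb2.
have := gauss0_neq0 hpsi (chi_lin i); have := gauss0_neq0 hpsi (chi_lin j).
move=> *; field; by repeat (apply/andP; split).
Qed.
Lemma sum3 (A B C : F -> algC) d :
  (\sum_a A a) * (\sum_b B b) * (\sum_f C f) * d
  = \sum_a \sum_b \sum_f A a * B b * C f * d.
Proof.
have -> : (\sum_a A a) * (\sum_b B b) = \sum_a \sum_b A a * B b.
  by rewrite mulr_suml; apply: eq_bigr => a _; rewrite mulr_sumr.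
rewrite mulr_suml mulr_suml; apply: eq_bigr => a _.
rewrite mulr_suml mulr_suml; apply: eq_bigr => b _.
by rewrite mulr_sumr mulr_suml.
Qed.

Lemma delta_sum (w : F) (K : F -> algC) : w != 0 ->
  \sum_f K f * (w * f^-1 == 1)%:R = K w.
Proof.
move=> nw; rewrite (bigD1 w) //= mulfV // eqxx mulr1 big1 ?addr0 // => f nf.
have [->|nf0] := eqVneq f 0; first by rewrite invr0 mulr0 eq_sym oner_eq0 mulr0.
rewrite (_ : (w * f^-1 == 1) = false) ?mulr0 //; apply/negbTE; apply: contra nf.
by move/eqP => h; apply/eqP; rewrite -[w](divfK nf0) h mul1r.
Qed.

Lemma Hsum (r p : 'CF(G)) z : lin r -> lin p -> z != 0 ->
  \sum_(i : Iirr G) g (r * 'chi_i) * g (p * 'chi_i) * g (('chi_i)^*)%CF * cext 'chi_i z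
  = - (q - 1) * \sum_a \sum_b psi (a + b + a * b * z) * cext r a * cext p b.
Proof.
move=> lr lp nz.
have step : forall i : Iirr G, g (r * 'chi_i) * g (p * 'chi_i) * g (('chi_i)^*)%CF * cext 'chi_i z
  = - \sum_a \sum_b \sum_f psi a * psi b * psi f * cext r a * cext p b * cext 'chi_i (a * b * z * f^-1).
  move=> i; have li := chi_lin i.
  rewrite !gaussE mulrNN mulrN mulNr sum3; congr (- _).
  apply: eq_bigr => a _; apply: eq_bigr => b _; apply: eq_bigr => f _.
  rewrite !cext_mul cext_conj (cext_conjV li) !(cextM li) (cextV li); ring.
under eq_bigr => i _ do rewrite step.
rewrite sumrN mulNr; congr (- _).
rewrite exchange_big mulr_sumr; apply: eq_bigr => a _.
rewrite exchange_big mulr_sumr; apply: eq_bigr => b _.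
rewrite exchange_big /=.
under eq_bigr => f _ do rewrite -mulr_sumr orth.
have [ab0|nab] := eqVneq (a * b) 0.
  move/eqP: ab0; rewrite mulf_eq0 => /orP[] /eqP ->; rewrite !cext0 ?mulr0 ?mul0r;
  by rewrite big1 ?mulr0 // => f _; rewrite ?mulr0 ?mul0r.
rewrite (eq_bigr (fun f => (psi a * psi b * cext r a * cext p b * (q - 1) * psi f) * ((a * b * z) * f^-1 == 1)%:R)); last first.
  by move=> f _; ring.
rewrite (@delta_sum (a * b * z) (fun f => psi a * psi b * cext r a * cext p b * (q - 1) * psi f)) ?mulf_neq0 //; last first.
  by move: nab; rewrite mulf_eq0 negb_or => /andP[].
  by move: nab; rewrite mulf_eq0 negb_or => /andP[].
rewrite !(psiD hpsi); ring.
Qed.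
Lemma Isum (r p : 'CF(G)) x e : lin r -> lin p -> r != 1 -> e != 0 ->
  \sum_a \sum_b psi (a + b + a * b * (x * e^-1)) * cext r a * cext p b
  = - g r * cext p e * \sum_s psi (e * s) * cext p s * cext r ((1 + x * s)^-1).
Proof.
move=> lr lp nr ne; have ue : e \is a GRing.unit by rewrite unitfE.
rewrite exchange_big /= (reindex_inj (mulrI ue)) /= mulr_sumr; apply: eq_bigr => s _.
have E : forall a, a + e * s + a * (e * s) * (x * e^-1) = e * s + (1 + x * s) * a.
  by move=> a; field.
under eq_bigr => a _ do rewrite E (psiD hpsi).
have -> : \sum_a psi (e * s) * psi ((1 + x * s) * a) * cext r a * cext p (e * s)
  = psi (e * s) * cext p (e * s) * \sum_a psi ((1 + x * s) * a) * cext r a.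
  by rewrite mulr_sumr; apply: eq_bigr => a _; ring.
rewrite (twist hpsi lr _ nr) (cextM lp); ring.
Qed.
Lemma gconj_expand (c n1 n2 : 'CF(G)) : lin n1 -> lin n2 ->
  g ((c * (n1 * n2))^*)%CF
  = \sum_e (- psi e) * cext (c^*)%CF e * cext n1 (e^-1) * cext n2 (e^-1).
Proof.
move=> l1 l2; rewrite gaussE -sumrN; apply: eq_bigr => e _; rewrite !mulNr; congr (- _).
rewrite cext_conj !cext_mul !rmorphM /= (cext_conjV l1) (cext_conjV l2).
by rewrite -(cextV l1) -(cextV l2) -cext_conj; ring.
Qed.

Lemma sum2 (I J : finType) (A : I -> algC) (B : J -> algC) k :
  \sum_i \sum_j k * A i * B j = k * (\sum_i A i) * (\sum_j B j).
Proof.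
rewrite [k * _]mulr_sumr mulr_suml; apply: eq_bigr => i _.
by rewrite mulr_sumr; apply: eq_bigr => j _.
Qed.

Lemma q1_neq0 : q - 1 != 0.
Proof.
by rewrite subr_eq0 pnatr_eq1 neq_ltn card_finNzRing_gt1 orbT.
Qed.

Definition Ssum (p1 p2 r1 r2 w : 'CF(G)) (x y : F) : algC :=
  \sum_s \sum_t cext p1 s * cext p2 t * cext r1 ((1 + x * s)^-1)
     * cext r2 ((1 + y * t)^-1) * cext w ((1 + s + t)^-1).

Lemma F3_S (a1 a2 b1 b2 c : 'CF(G)) x y :
  lin a1 -> lin a2 -> lin b1 -> lin b2 -> lin c ->
  a1 != 1 -> a2 != 1 -> b1 * b2 * (c^*)%CF != 1 -> x != 0 -> y != 0 ->
  appellF3 psi a1 a2 b1 b2 c x y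
  = gauss0 psi c * cext c (-1) * g (b1 * b2 * (c^*)%CF) / (q * g b1 * g b2)
    * Ssum b1 b2 a1 a2 (b1 * b2 * (c^*)%CF) x y.
Proof.
move=> la1 la2 lb1 lb2 lc na1 na2 nw nx ny.
set w := b1 * b2 * (c^*)%CF.
have lw : lin w by rewrite /w !rpredM // cfConjC_lin_char.
set Kc := gauss0 psi c * cext c (-1) / (g a1 * g a2 * g b1 * g b2 * q).
pose P (i : Iirr G) := g (a1 * 'chi_i) * g (b1 * 'chi_i) * g (('chi_i)^*)%CF.
pose Q (i : Iirr G) := g (a2 * 'chi_i) * g (b2 * 'chi_i) * g (('chi_i)^*)%CF.
pose H1 e := \sum_i P i * cext 'chi_i (x * e^-1).
pose H2 e := \sum_i Q i * cext 'chi_i (y * e^-1).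
have T1 : forall i j : Iirr G,
  poch psi a1 'chi_i * poch psi a2 'chi_j * poch psi b1 'chi_i * poch psi b2 'chi_j
     / (poch0 psi c ('chi_i * 'chi_j) * poch0 psi 1 'chi_i * poch0 psi 1 'chi_j)
   * cext 'chi_i x * cext 'chi_j y
  = \sum_e (Kc * (- psi e * cext (c^*)%CF e)) * (P i * cext 'chi_i (x * e^-1))
        * (Q j * cext 'chi_j (y * e^-1)).
  move=> i j; have li := chi_lin i; have lj := chi_lin j.
  rewrite summand_eq // gconj_expand //.
  rewrite mulr_sumr !mulr_suml; apply: eq_bigr => e _.
  rewrite (cextM li) (cextM lj) /P /Q /Kc; ring.
rewrite /appellF3.
under eq_bigr => i _ do under eq_bigr => j _ do rewrite T1.
rewrite (eq_bigr (fun i => \sum_e \sum_j (Kc * (- psi e * cext (c^*)%CF e)) * (P i * cext 'chi_i (x * e^-1))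
        * (Q j * cext 'chi_j (y * e^-1)))); last first.
  by move=> i _; rewrite exchange_big.
rewrite exchange_big /=.
under eq_bigr => e _ do rewrite sum2.
pose X s := cext b1 s * cext a1 ((1 + x * s)^-1).
pose Y t := cext b2 t * cext a2 ((1 + y * t)^-1).
have T2 : forall e, Kc * (- psi e * cext (c^*)%CF e) * (\sum_i P i * cext 'chi_i (x / e))
     * (\sum_j Q j * cext 'chi_j (y / e))
   = Kc * (q - 1) ^+ 2 * g a1 * g a2 * ((- psi e * cext w e)
       * (\sum_s psi (e * s) * X s) * (\sum_t psi (e * t) * Y t)).
  move=> e; have [->|ne] := eqVneq e 0.
    by rewrite !cext0 !(mulr0, mul0r).
  have nxe : x / e != 0 by rewrite mulf_neq0 ?invr_eq0.
  have nye : y / e != 0 by rewrite mulf_neq0 ?invr_eq0.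
  rewrite /P /Q (Hsum la1 lb1 nxe) (Hsum la2 lb2 nye) (Isum _ la1 lb1 na1 ne) (Isum _ la2 lb2 na2 ne).
  rewrite /w !cext_mul cext_conj.
  have -> : \sum_s psi (e * s) * cext b1 s * cext a1 ((1 + x * s)^-1) = \sum_s psi (e * s) * X s.
    by apply: eq_bigr => s _; rewrite /X mulrA.
  have -> : \sum_s psi (e * s) * cext b2 s * cext a2 ((1 + y * s)^-1) = \sum_t psi (e * t) * Y t.
    by apply: eq_bigr => s _; rewrite /Y mulrA.
  ring.
under eq_bigr => e _ do rewrite T2.
rewrite -mulr_sumr.
have T3 : \sum_e (- psi e * cext w e) * (\sum_s psi (e * s) * X s) * (\sum_t psi (e * t) * Y t)
   = g w * Ssum b1 b2 a1 a2 w x y.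
  rewrite /Ssum mulr_sumr.
  rewrite (eq_bigr (fun e => \sum_s \sum_t (- psi e * cext w e) * (psi (e * s) * X s) * (psi (e * t) * Y t)));
    last by move=> e _; rewrite sum2.
  rewrite exchange_big; apply: eq_bigr => s _; rewrite mulr_sumr exchange_big; apply: eq_bigr => t _.
  have -> : \sum_e (- psi e * cext w e) * (psi (e * s) * X s) * (psi (e * t) * Y t)
     = - (X s * Y t) * \sum_e psi ((1 + s + t) * e) * cext w e.
    rewrite mulr_sumr; apply: eq_bigr => e _.
    rewrite (_ : (1 + s + t) * e = e + e * s + e * t); last by ring.
    rewrite !(psiD hpsi); ring.
  rewrite (twist hpsi lw _ nw) /X /Y; ring.
rewrite T3.
have := q_neq0 F; have := q1_neq0; have := gauss_neq0 hpsi la1; have := gauss_neq0 hpsi la2.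
have := gauss_neq0 hpsi lb1; have := gauss_neq0 hpsi lb2.
have h1q : 1 - q != 0 by rewrite -oppr_eq0 opprB q1_neq0.
move=> *; rewrite /Kc; field; by repeat (apply/andP; split).
Qed.
End F3S.

Section Cremona.
Variable F : finFieldType.
Local Notation G := (UG F).
Local Notation lin phi := (phi \is a linear_char).

Lemma cremona_term (A1 A2 B1 B2 C : 'CF(G)) (x y s t : F) :
  lin A1 -> lin A2 -> lin B1 -> lin B2 -> lin C ->
  x - 1 != 0 -> x - 1 + x * t != 0 -> 1 + x * s != 0 ->
  y = x / (x - 1) ->
  let s' := - (1 + s + t) / (1 + x * s) in
  cext (((A2 * B1)^*)%CF * C) s' * cext A2 t * cext (((A1 * A2)^*)%CF * C) ((1 + x * s')^-1)
   * cext (A1 * A2 * B1 * B2 * (C^*)%CF) ((1 + y * t)^-1)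
   * cext (((A2 * B1)^*)%CF * C * A2 * (C^*)%CF) ((1 + s' + t)^-1)
  = cext (A2 * (C^*)%CF) (-1) * cext (A1 * A2 * B1 * (C^*)%CF) (1 - x)
   * (cext B1 s * cext A2 t * cext A1 ((1 + x * s)^-1) * cext B2 ((1 + y * t)^-1)
      * cext (B1 * A2 * (C^*)%CF) ((1 + s + t)^-1)).
Proof.
move=> l1 l2 l3 l4 l5 hx hE hD hy s'.
set D := 1 + x * s; set E := x - 1 + x * t.
have e1 : s' = (-1) * (1 + s + t) * D^-1 by rewrite /s'; ring.
have e2 : 1 + x * s' = (-1) * E * D^-1 by rewrite e1 /E /D; field.
have e3 : 1 + y * t = E * (x - 1)^-1 by rewrite hy /E; field.
have e4 : 1 + s' + t = s * E * D^-1 by rewrite e1 /E /D; field.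
have e5 : 1 - x = (-1) * (x - 1) by ring.
rewrite e2 e3 e4 e5 e1.
have [->|ns] := eqVneq s 0; first by rewrite !mul0r !(cext0, invr0, mulr0, mul0r).
have [->|nt] := eqVneq t 0; first by rewrite !(cext0, invr0, mulr0, mul0r).
set P := 1 + s + t.
have [->|nP] := eqVneq P 0; first by rewrite !(mulr0, cext0, invr0, mul0r).
rewrite !cext_mul !cext_conj !cext_mul !rmorphM /=.
rewrite !(cext_conjV l1, cext_conjV l2, cext_conjV l3, cext_conjV l4, cext_conjV l5).
rewrite ?(cextM l1, cextM l2, cextM l3, cextM l4, cextM l5, cextV l1, cextV l2, cextV l3, cextV l4, cextV l5).
rewrite !invfM !invrK -!(signV l1, signV l2, signV l3, signV l4, signV l5).
have n1 : (-1 : F) != 0 by rewrite oppr_eq0 oner_eq0.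
have z1 := cext_neq0 l1 n1.
have z2 := cext_neq0 l1 nP.
have z3 := cext_neq0 l1 hD.
have z4 := cext_neq0 l1 hE.
have z5 := cext_neq0 l1 hx.
have z6 := cext_neq0 l1 ns.
have z7 := cext_neq0 l1 nt.
have z8 := cext_neq0 l2 n1.
have z9 := cext_neq0 l2 nP.
have z10 := cext_neq0 l2 hD.
have z11 := cext_neq0 l2 hE.
have z12 := cext_neq0 l2 hx.
have z13 := cext_neq0 l2 ns.
have z14 := cext_neq0 l2 nt.
have z15 := cext_neq0 l3 n1.
have z16 := cext_neq0 l3 nP.
have z17 := cext_neq0 l3 hD.
have z18 := cext_neq0 l3 hE.
have z19 := cext_neq0 l3 hx.
have z20 := cext_neq0 l3 ns.
have z21 := cext_neq0 l3 nt.
have z22 := cext_neq0 l4 n1.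
have z23 := cext_neq0 l4 nP.
have z24 := cext_neq0 l4 hD.
have z25 := cext_neq0 l4 hE.
have z26 := cext_neq0 l4 hx.
have z27 := cext_neq0 l4 ns.
have z28 := cext_neq0 l4 nt.
have z29 := cext_neq0 l5 n1.
have z30 := cext_neq0 l5 nP.
have z31 := cext_neq0 l5 hD.
have z32 := cext_neq0 l5 hE.
have z33 := cext_neq0 l5 hx.
have z34 := cext_neq0 l5 ns.
have z35 := cext_neq0 l5 nt.
field; by repeat (apply/andP; split).
Qed.
Lemma cremona (A1 A2 B1 B2 C : 'CF(G)) (x y : F) :
  lin A1 -> lin A2 -> lin B1 -> lin B2 -> lin C ->
  x - 1 != 0 -> y = x / (x - 1) ->
  Ssum (((A2 * B1)^*)%CF * C) A2 (((A1 * A2)^*)%CF * C) (A1 * A2 * B1 * B2 * (C^*)%CF)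
       (((A2 * B1)^*)%CF * C * A2 * (C^*)%CF) x y
  = cext (A2 * (C^*)%CF) (-1) * cext (A1 * A2 * B1 * (C^*)%CF) (1 - x)
    * Ssum B1 A2 A1 B2 (B1 * A2 * (C^*)%CF) x y.
Proof.
move=> l1 l2 l3 l4 l5 hx hy.
rewrite /Ssum exchange_big [in RHS]exchange_big mulr_sumr /=; apply: eq_bigr => t _.
have [hE0|hE] := eqVneq (x - 1 + x * t) 0.
  have z : (1 + y * t)^-1 = 0.
    have e : 1 + y * t = (x - 1 + x * t) / (x - 1) by rewrite hy; field.
    by rewrite e hE0 mul0r invr0.
  rewrite mulr_sumr !big1 // => s _; rewrite z !cext0 !(mulr0, mul0r) //.
pose f s := if 1 + x * s == 0 then s else - (1 + s + t) / (1 + x * s).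
have finv : involutive f.
  move=> s; rewrite /f; have [hD|hD] := eqVneq (1 + x * s) 0; first by rewrite hD eqxx.
  have e2 : 1 + x * (- (1 + s + t) / (1 + x * s)) = - (x - 1 + x * t) / (1 + x * s) by field.
  rewrite e2 mulf_eq0 oppr_eq0 (negbTE hE) invr_eq0 (negbTE hD) /=.
  field; by rewrite hD oppr_eq0 hE.
rewrite (reindex_inj (inv_inj finv)) mulr_sumr; apply: eq_bigr => s _.
rewrite /f; have [hD|hD] := eqVneq (1 + x * s) 0.
  by rewrite hD !(invr0, cext0, mulr0, mul0r).
exact: cremona_term.
Qed.
End Cremona.

Section Final.
Variable F : finFieldType.
Local Notation G := (UG F).
Local Notation lin phi := (phi \is a linear_char).

Lemma F3_swap1 psi (a1 a2 b1 b2 c : 'CF(G)) x y :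
  appellF3 psi a1 a2 b1 b2 c x y = appellF3 psi b1 a2 a1 b2 c x y.
Proof.
rewrite /appellF3; congr (_ * _); apply: eq_bigr => i _; apply: eq_bigr => j _.
congr (_ * _ * _); congr (_ / _); ring.
Qed.

Lemma F3_swap2 psi (a1 a2 b1 b2 c : 'CF(G)) x y :
  appellF3 psi a1 a2 b1 b2 c x y = appellF3 psi a1 b2 b1 a2 c x y.
Proof.
rewrite /appellF3; congr (_ * _); apply: eq_bigr => i _; apply: eq_bigr => j _.
congr (_ * _ * _); congr (_ / _); ring.
Qed.

Lemma F3_x0 psi (a1 a2 b1 b2 c : 'CF(G)) y : appellF3 psi a1 a2 b1 b2 c 0 y = 0.
Proof.
rewrite /appellF3 big1 ?mulr0 // => i _; rewrite big1 // => j _.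
by rewrite cext0 mulr0 mul0r.
Qed.

Lemma conj_eq1 (X Y : 'CF(G)) : lin X -> Y * (X^*)%CF = 1 -> Y = X.
Proof.
move=> lX h; have := congr1 (fun Z => Z * X) h.
by rewrite mul1r -mulrA [_ * X]mulrC mul_conjC_lin_char // mulr1.
Qed.

End Final.
Unset Implicit Arguments.
Theorem corollary3p15 (F : finFieldType) (psi : F -> algC)
    (hpsi : nontriv_addchar psi)
    (a1 a2 b1 b2 c : Iirr (UG F)) (lam : F) :
  let A1 := 'chi_a1 in let A2 := 'chi_a2 in
  let B1 := 'chi_b1 in let B2 := 'chi_b2 in let C := 'chi_c in
  C != A1 * A2 -> C != B1 * B2 -> C != A1 * B2 -> C != A2 * B1 ->
  C != A1 * A2 * B1 * B2 ->
  A1 != 1 -> A2 != 1 -> B1 != 1 -> B2 != 1 ->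
  lam != 1 ->
  cext (A1 * A2 * B1 * (C^*)%CF) (1 - lam)
    * appellF3 psi A1 A2 B1 B2 C lam (lam / (lam - 1))
  = appellF3 psi ((A2 * B1)^*%CF * C) (A1 * A2 * B1 * B2 * (C^*)%CF)
           ((A1 * A2)^*%CF * C) A2 C lam (lam / (lam - 1)).
Proof.
move=> A1 A2 B1 B2 C h12 hb12 h1b2 h2b1 hall nA1 nA2 nB1 nB2 nl.
have lA1 : A1 \is a linear_char := chi_lin a1.
have lA2 : A2 \is a linear_char := chi_lin a2.
have lB1 : B1 \is a linear_char := chi_lin b1.
have lB2 : B2 \is a linear_char := chi_lin b2.
have lC : C \is a linear_char := chi_lin c.
have lCc : (C^*)%CF \is a linear_char by rewrite cfConjC_lin_char.
have [->|nx] := eqVneq lam 0; first by rewrite !F3_x0 mulr0.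
have hx : lam - 1 != 0 by rewrite subr_eq0.
have ny : lam / (lam - 1) != 0 by rewrite mulf_neq0 ?invr_eq0.
set y := lam / (lam - 1).
pose wL := B1 * A2 * (C^*)%CF.
have lwL : wL \is a linear_char by rewrite /wL !rpredM.
have nwL : wL != 1.
  by apply: contra h2b1 => /eqP /(conj_eq1 lC) <-; rewrite mulrC.
have nb1' : ((A1 * A2)^*)%CF * C != 1.
  apply: contra h12 => /eqP; rewrite mulrC => /(conj_eq1 (rpredM lA1 lA2)) ->; by [].
have na2' : A1 * A2 * B1 * B2 * (C^*)%CF != 1.
  by apply: contra hall => /eqP /(conj_eq1 lC) ->.
have eR : ((A2 * B1)^*)%CF * C * A2 * (C^*)%CF = (B1^*)%CF.
  have -> : ((A2 * B1)^*)%CF * C * A2 * (C^*)%CF = (B1^*)%CF * (A2 * (A2^*)%CF) * (C * (C^*)%CF).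
    by rewrite rmorphM /=; ring.
  by rewrite !mul_conjC_lin_char // !mulr1.
have nwR : ((A2 * B1)^*)%CF * C * A2 * (C^*)%CF != 1.
  rewrite eR; apply: contra nB1 => /eqP h; apply/eqP.
  by rewrite -[B1]cfConjCK h cfConjC_cfun1.
have la1' : ((A2 * B1)^*)%CF * C \is a linear_char by rewrite rpredM ?cfConjC_lin_char ?rpredM.
have lb1' : ((A1 * A2)^*)%CF * C \is a linear_char by rewrite rpredM ?cfConjC_lin_char ?rpredM.
have la2' : A1 * A2 * B1 * B2 * (C^*)%CF \is a linear_char by rewrite !rpredM.
rewrite F3_swap2 (F3_S hpsi lA1 lB2 lB1 lA2 lC nA1 nB2 nwL nx ny).
rewrite F3_swap1 (F3_S hpsi lb1' la2' la1' lA2 lC nb1' na2' nwR nx ny).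
rewrite (cremona lA1 lA2 lB1 lB2 lC hx erefl).
rewrite eR.
have eA : ((A2 * B1)^*)%CF * C = (wL^*)%CF.
  by rewrite /wL !rmorphM /= cfConjCK; ring.
rewrite eA.
have gL0 := gauss_neq0 hpsi lwL; have gB0 := gauss_neq0 hpsi lB1.
have gA0 := gauss_neq0 hpsi lA2; have q0 := q_neq0 F.
have hL : gauss psi (wL^*)%CF = cext wL (-1) * #|F|%:R / gauss psi wL.
  by rewrite -(gauss_prod1 hpsi lwL nwL); field.
have hB : gauss psi (B1^*)%CF = cext B1 (-1) * #|F|%:R / gauss psi B1.
  by rewrite -(gauss_prod1 hpsi lB1 nB1); field.
rewrite hL hB /wL !cext_mul !cext_conj !(cext_conjV lC).
have z1 := sign_neq0 lA2; have z2 := sign_neq0 lB1; have z3 := sign_neq0 lC.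
have h1l : 1 - lam != 0 by rewrite subr_eq0 eq_sym.
have z4 := cext_neq0 lC h1l.
field; by repeat (apply/andP; split).
Qed.
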